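(* Fix $J\in\mathbb Z_{>0}$, $i_1,j_1,i_2\in\mathbb Z_{\ge0}$ and $j_2\in\{0,\dots,J\}$. Then $$W_J(i_1,j_1;i_2,j_2\mid v,\lambda)=\sum_{k=0}^J W_{j_2}\big(i_1,k;\,i_1+k-j_2,\,j_2\mid v,\,\lambda-2\eta(J-2j_1-j_2+2k)\big)\,W_{J-j_2}\big(i_1+k-j_2,\,j_1-k;\,i_2,\,0\mid v+2\eta j_2,\,\lambda\big),$$ with the conventions that $W_0(i,0;i,0\mid\cdot)=1$, $W_0(i,j;i',j')=0$ if $(j,j')\neq(0,0)$ or $i\ne i'$, and any weight with a negative argument is $0$.
   Context: Fix $\eta,\tau\in\mathbb C$, $\operatorname{Im}\tau>0$. $f(z)$ denotes either $\theta(z)=-\sum_{j\in\mathbb Z}\exp\big(\pi\mathbf i\tau(j+\tfrac12)^2+2\pi\mathbf i(j+\tfrac12)(z+\tfrac12)\big)$ or $\sin(\pi z)$. Unfused weights ($k\ge0$): $W_1(k,0;k,0\mid v,\lambda,\Lambda)=\frac{f(\eta(\Lambda-2k)-v)f(\lambda+2k\eta)}{f(\eta\Lambda-v)f(\lambda)}$, $W_1(k,1;k+1,0\mid\cdot)=\frac{f(v+\lambda+\eta(2k+2-\Lambda))f(2\eta)}{f(\eta\Lambda-v)f(\lambda)}$, $W_1(k,0;k-1,1\mid\cdot)=\frac{f(\lambda-v+\eta(2k-2-\Lambda))f(2\eta(\Lambda+1-k))f(2k\eta)}{f(\eta\Lambda-v)f(\lambda)f(2\eta)}$ ($k\ge1$),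 $W_1(k,1;k,1\mid\cdot)=\frac{f(\eta(2k-\Lambda)-v)f(\lambda+2\eta(k-\Lambda))}{f(\eta\Lambda-v)f(\lambda)}$, and $0$ otherwise. Column weights: for $\mathcal J_1=(j_{1,k})_{k=1}^J,\mathcal J_2=(j_{2,k})_{k=1}^J\in\{0,1\}^J$, $i^{(1)}=i_1$, $i^{(k+1)}=i^{(k)}+j_{1,k}-j_{2,k}$, $\Phi_J=\lambda$, $\Phi_k=\Phi_{k+1}\mp2\eta$ according as $j_{1,k+1}=0$ or $1$; $W_J(i_1,\mathcal J_1;i_2,\mathcal J_2\mid v,\lambda)=\prod_{k=1}^JW_1(i^{(k)},j_{1,k};i^{(k+1)},j_{2,k}\mid v+2\eta(k-1),\Phi_k,\Lambda)$ if all $i^{(k)}\ge0$ and $i^{(J+1)}=i_2$, else $0$. Fused weight: $W_J(i_1,j_1;i_2,j_2\mid v,\lambda)=\sum_{|\mathcal J_1|=j_1}W_J(i_1,\mathcal J_1;i_2,\mathcal K\mid v,\lambda)$ for any $\mathcal K$ with $|\mathcal K|=j_2$ (independent of $\mathcal K$); $\Lambda$ is suppressed. *)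

(* Defs.v *)
From Stdlib Require Import Reals ZArith List Bool ClassicalEpsilon.
Import ListNotations.
Open Scope bool_scope.
Open Scope R_scope.

Record CC := mkC { re : R; im : R }.
Definition CR (r : R) : CC := mkC r 0.
Definition CZ (z : Z) : CC := CR (IZR z).
Definition C0 : CC := CR 0.
Definition C1 : CC := CR 1.
Definition Ci : CC := mkC 0 1.
Definition Cadd (x y : CC) : CC := mkC (re x + re y) (im x + im y).
Definition Copp (x : CC) : CC := mkC (- re x) (- im x).
Definition Csub (x y : CC) : CC := Cadd x (Copp y).
Definition Cmul (x y : CC) : CC :=
  mkC (re x * re y - im x * im y) (re x * im y + im x * re y).
Definition Cinv (x : CC) : CC :=
  let d := re x * re x + im x * im x in mkC (re x / d) (- im x / d).
Definition Cdiv (x y : CC) : CC := Cmul x (Cinv y).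
Definition Cexp (z : CC) : CC := mkC (exp (re z) * cos (im z)) (exp (re z) * sin (im z)).
Definition CPI : CC := CR PI.

Declare Scope C_scope.
Delimit Scope C_scope with CC.
Infix "+" := Cadd : C_scope.
Infix "-" := Csub : C_scope.
Infix "*" := Cmul : C_scope.
Infix "/" := Cdiv : C_scope.
Notation "- x" := (Copp x) : C_scope.

Fixpoint Csum (l : list CC) : CC :=
  match l with [] => C0 | x :: t => Cadd x (Csum t) end.

Definition Ccv (u : nat -> CC) (l : CC) : Prop :=
  Un_cv (fun n => re (u n)) (re l) /\ Un_cv (fun n => im (u n)) (im l).

Definition Cpartial (a : Z -> CC) (N : nat) : CC :=
  Csum (map (fun n => a (Z.of_nat n - Z.of_nat N)%Z) (seq 0 (2 * N + 1))).

(** sum over Z (the theta series converges absolutely, so the symmetric limit is its sum) *)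
Definition CsumZ (a : Z -> CC) : CC :=
  epsilon (inhabits C0) (fun s => Ccv (Cpartial a) s).

Definition sinpi (z : CC) : CC :=
  ((Cexp (Ci * CPI * z) - Cexp (- (Ci * CPI * z))) / (CZ 2 * Ci))%CC.

Definition half : CC := CR (1/2).
Definition theta (tau z : CC) : CC :=
  Copp (CsumZ (fun j =>
    let h := (CZ j + half)%CC in
    Cexp (CPI * Ci * tau * h * h + CZ 2 * CPI * Ci * h * (z + half))%CC)).

Open Scope C_scope.
Definition W1 (f : CC -> CC) (eta : CC) (i j i' j' : Z) (v lam Lam : CC) : CC :=
  let k := CZ i in
  let den := f (eta * Lam - v) * f lam in
  if (i <? 0)%Z then C0 else
  if (j =? 0)%Z && (j' =? 0)%Z && (i' =? i)%Z then
    f (eta * (Lam - CZ 2 * k) - v) * f (lam + CZ 2 * k * eta) / den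
  else if (j =? 1)%Z && (j' =? 0)%Z && (i' =? i + 1)%Z then
    f (v + lam + eta * (CZ 2 * k + CZ 2 - Lam)) * f (CZ 2 * eta) / den
  else if (j =? 0)%Z && (j' =? 1)%Z && (i' =? i - 1)%Z && (1 <=? i)%Z then
    f (lam - v + eta * (CZ 2 * k - CZ 2 - Lam)) * f (CZ 2 * eta * (Lam + C1 - k))
      * f (CZ 2 * k * eta) / (den * f (CZ 2 * eta))
  else if (j =? 1)%Z && (j' =? 1)%Z && (i' =? i)%Z then
    f (eta * (CZ 2 * k - Lam) - v) * f (lam + CZ 2 * eta * (k - Lam)) / den
  else C0.

(** Phi_k from the tail [j_{1,k+1}; ...; j_{1,J}]:
    Phi_J = lam, Phi_k = Phi_{k+1} -/+ 2 eta according as j_{1,k+1} = 0 / 1 *)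
Definition Phi (eta lam : CC) (tail : list Z) : CC :=
  fold_right (fun m acc => if (m =? 0)%Z then acc - CZ 2 * eta else acc + CZ 2 * eta)
    lam tail.

(** product over the column; returns (i^(J+1), product) *)
Fixpoint colW_aux (f : CC -> CC) (eta Lam : CC) (i : Z) (l1 l2 : list Z) (v lam : CC)
  : Z * CC :=
  match l1, l2 with
  | a :: t1, b :: t2 =>
      let i' := (i + a - b)%Z in
      let '(e, p) := colW_aux f eta Lam i' t1 t2 (v + CZ 2 * eta) lam in
      (e, W1 f eta i a i' b v (Phi eta lam t1) Lam * p)
  | _, _ => (i, C1)
  end.

(** column weight W_J(i1, J1; i2, J2 | v, lam) (J = length of the lists) *)
Definition colW (f : CC -> CC) (eta Lam : CC) (i1 : Z) (l1 : list Z) (i2 : Z) (l2 : list Z)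
    (v lam : CC) : CC :=
  if (i1 <? 0)%Z || (i2 <? 0)%Z then C0 else
  let '(e, p) := colW_aux f eta Lam i1 l1 l2 v lam in
  if (e =? i2)%Z then p else C0.

Fixpoint bits (n : nat) : list (list Z) :=
  match n with
  | O => [ [] ]
  | S n => map (cons 0%Z) (bits n) ++ map (cons 1%Z) (bits n)
  end.

Definition sumZ (l : list Z) : Z := fold_right Z.add 0%Z l.

Definition fusedWK (f : CC -> CC) (eta Lam : CC) (J : nat) (i1 j1 i2 : Z) (K : list Z)
    (v lam : CC) : CC :=
  Csum (map (fun l1 => colW f eta Lam i1 l1 i2 K v lam)
            (filter (fun l => (sumZ l =? j1)%Z) (bits J))).

(** fused weight W_J(i1, j1; i2, j2 | v, lam), using K = (1,..,1,0,..,0);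
    zero if j2 is outside {0..J} (negative-argument convention) *)
Definition fusedW (f : CC -> CC) (eta Lam : CC) (J : nat) (i1 j1 i2 j2 : Z) (v lam : CC) : CC :=
  if (j2 <? 0)%Z || (Z.of_nat J <? j2)%Z then C0 else
  fusedWK f eta Lam J i1 j1 i2
    (repeat 1%Z (Z.to_nat j2) ++ repeat 0%Z (J - Z.to_nat j2)) v lam.

(* Main.v *)
Require Import Defs.
From Stdlib Require Import Reals ZArith List.
From Stdlib Require Import Lra Lia Field Ring Psatz Bool Permutation ClassicalEpsilon.
Import Defs.
Import ListNotations.
Open Scope C_scope.

Lemma Ceq (x y : CC) : re x = re y -> im x = im y -> x = y.
Proof. destruct x, y; simpl; intros; subst; reflexivity. Qed.

Lemma CC_ring : ring_theory C0 C1 Cadd Cmul Csub Copp (@eq CC).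
Proof.
  constructor; intros; apply Ceq; unfold C0, C1, CR, Cadd, Cmul, Csub, Copp; simpl; ring.
Qed.

Lemma C1_neq_C0 : C1 <> C0.
Proof. intro H. assert (re C1 = re C0) by (rewrite H; auto). unfold C1,C0,CR in H0; simpl in H0. lra. Qed.

Lemma Cnz_d (x : CC) : x <> C0 -> (re x * re x + im x * im x <> 0)%R.
Proof.
  intros H Hd. apply H. apply Ceq; unfold C0, CR; simpl; nra.
Qed.

Lemma CC_field : field_theory C0 C1 Cadd Cmul Csub Copp Cdiv Cinv (@eq CC).
Proof.
  constructor.
  - exact CC_ring.
  - exact C1_neq_C0.
  - reflexivity.
  - intros x Hx. pose proof (Cnz_d x Hx). apply Ceq; unfold Cinv, Cmul, C1, CR; simpl; field; auto.
Qed.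

Lemma CZ_morph : ring_morph C0 C1 Cadd Cmul Csub Copp (@eq CC)
  0%Z 1%Z Z.add Z.mul Z.sub Z.opp Z.eqb CZ.
Proof.
  constructor; intros; apply Ceq; unfold CZ, CR, Cadd, Cmul, Csub, Copp, C0, C1; simpl;
    rewrite ?plus_IZR, ?minus_IZR, ?mult_IZR, ?opp_IZR; try ring.
  apply Z.eqb_eq in H; subst; reflexivity.
Qed.

Ltac CZcst t :=
  match t with
  | CZ ?z => match isZcst z with true => z | _ => constr:(NotConstant) end
  | C0 => constr:(0%Z)
  | C1 => constr:(1%Z)
  | _ => constr:(NotConstant)
  end.

Add Field CCfield : CC_field (morphism CZ_morph, constants [CZcst]).

Lemma test (a b : CC) : b <> C0 -> a / b * b = a.
Proof. intros. field. auto. Qed.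

Lemma CZ_add a b : CZ (a + b) = CZ a + CZ b.
Proof. apply Ceq; unfold CZ, CR, Cadd; simpl; [rewrite plus_IZR|]; ring. Qed.
Lemma CZ_mul a b : CZ (a * b) = CZ a * CZ b.
Proof. apply Ceq; unfold CZ, CR, Cmul; simpl; [rewrite mult_IZR|]; ring. Qed.
Lemma CZ_opp a : CZ (- a) = - CZ a.
Proof. apply Ceq; unfold CZ, CR, Copp; simpl; [rewrite opp_IZR|]; ring. Qed.
Lemma CZ_sub a b : CZ (a - b) = CZ a - CZ b.
Proof. unfold Z.sub, Csub. rewrite CZ_add, CZ_opp. reflexivity. Qed.
Lemma CZ_0 : CZ 0 = C0. Proof. reflexivity. Qed.
Lemma CZ_1 : CZ 1 = C1. Proof. reflexivity. Qed.
Lemma CZ_2 : CZ 2 = C1 + C1. Proof. apply Ceq; unfold CZ,CR,Cadd,C1; simpl; ring. Qed.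

Lemma Csum_app l1 l2 : Csum (l1 ++ l2) = Csum l1 + Csum l2.
Proof. induction l1; simpl. ring. rewrite IHl1; ring. Qed.

Lemma Csum_map_scal {A} (c : CC) (g : A -> CC) l :
  Csum (map (fun x => c * g x) l) = c * Csum (map g l).
Proof. induction l; simpl. ring. rewrite IHl; ring. Qed.

Lemma Csum_map_add {A} (g h : A -> CC) l :
  Csum (map (fun x => g x + h x) l) = Csum (map g l) + Csum (map h l).
Proof. induction l; simpl. ring. rewrite IHl; ring. Qed.

Lemma Csum_map_ext_in {A} (g h : A -> CC) l :
  (forall x, In x l -> g x = h x) -> Csum (map g l) = Csum (map h l).
Proof. intros H; rewrite (map_ext_in g h l H); reflexivity. Qed.

Lemma Csum_zero {A} (g : A -> CC) l : (forall x, In x l -> g x = C0) -> Csum (map g l) = C0.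
Proof. induction l; simpl; intros H. reflexivity. rewrite H by auto. rewrite IHl by auto. ring. Qed.

Lemma filter_map_comm {A B} (p : B -> bool) (g : A -> B) l :
  filter p (map g l) = map g (filter (fun x => p (g x)) l).
Proof. induction l; simpl; auto. destruct (p (g a)); simpl; rewrite IHl; auto. Qed.

Definition shl (eta lam : CC) (z : Z) : CC := lam + CZ 2 * eta * CZ z.

Ltac czr := try unfold shl; apply Ceq; unfold Csub, CZ, CR, Cadd, Cmul, Copp, C1, C0; cbn [re im];
  repeat rewrite ?plus_IZR, ?minus_IZR, ?mult_IZR, ?opp_IZR, ?Nat2Z.inj_succ, ?succ_IZR; ring.

Fixpoint FS (f : CC -> CC) (eta Lam : CC) (i j : Z) (K : list Z) (i2 : Z) (v lam : CC) : CC :=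
  match K with
  | [] => if (j =? 0)%Z && (i =? i2)%Z && (0 <=? i)%Z then C1 else C0
  | b :: K' =>
      W1 f eta i 0 (i + 0 - b) b v (shl eta lam (2 * j - Z.of_nat (length K'))) Lam
        * FS f eta Lam (i + 0 - b) j K' i2 (v + CZ 2 * eta) lam
      + W1 f eta i 1 (i + 1 - b) b v (shl eta lam (2 * (j - 1) - Z.of_nat (length K'))) Lam
        * FS f eta Lam (i + 1 - b) (j - 1) K' i2 (v + CZ 2 * eta) lam
  end.

Definition Z01 (x : Z) := x = 0%Z \/ x = 1%Z.

Lemma bits_prop n l : In l (bits n) -> length l = n /\ Forall Z01 l.
Proof.
  revert l; induction n; simpl; intros l H.
  - destruct H as [<-|[]]. split; auto.
  - apply in_app_or in H; destruct H as [H|H]; apply in_map_iff in H;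
      destruct H as [l' [<- H]]; destruct (IHn l' H); simpl; split; auto;
      constructor; auto; unfold Z01; auto.
Qed.

Lemma Phi_cons eta lam x l : Phi eta lam (x :: l) =
  if (x =? 0)%Z then Phi eta lam l - CZ 2 * eta else Phi eta lam l + CZ 2 * eta.
Proof. reflexivity. Qed.
Lemma sumZ_cons x l : sumZ (x :: l) = (x + sumZ l)%Z.
Proof. reflexivity. Qed.

Lemma Phi_shl eta lam l : Forall Z01 l ->
  Phi eta lam l = shl eta lam (2 * sumZ l - Z.of_nat (length l)).
Proof.
  induction 1.
  - cbn. czr.
  - rewrite Phi_cons, sumZ_cons, IHForall. cbn [length].
    destruct H as [->| ->]; cbn [Z.eqb]; czr.
Qed.

Definition colW2 (f : CC -> CC) (eta Lam : CC) (i1 : Z) (l1 : list Z) (i2 : Z) (l2 : list Z)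
    (v lam : CC) : CC :=
  let '(e, p) := colW_aux f eta Lam i1 l1 l2 v lam in
  if (e =? i2)%Z && (0 <=? i2)%Z then p else C0.

Lemma colW2_cons f eta Lam i a l i2 b K v lam :
  colW2 f eta Lam i (a :: l) i2 (b :: K) v lam =
  W1 f eta i a (i + a - b) b v (Phi eta lam l) Lam *
  colW2 f eta Lam (i + a - b) l i2 K (v + CZ 2 * eta) lam.
Proof.
  unfold colW2; simpl.
  destruct (colW_aux f eta Lam (i + a - b) l K (v + CZ 2 * eta) lam) as [e p].
  destruct ((e =? i2)%Z && (0 <=? i2)%Z); ring.
Qed.

Lemma W1_neg f eta i j i' j' v lam Lam : (i < 0)%Z -> W1 f eta i j i' j' v lam Lam = C0.
Proof. intros H; unfold W1. destruct (Z.ltb_spec i 0); [reflexivity|lia]. Qed.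

Lemma FS_neg f eta Lam i j K i2 v lam : (i < 0)%Z -> FS f eta Lam i j K i2 v lam = C0.
Proof.
  intros H; destruct K; simpl.
  - destruct (Z.leb_spec 0 i); [lia|]. rewrite !andb_false_r. reflexivity.
  - rewrite !W1_neg by lia. ring.
Qed.

Lemma filter_ext' {A} (p q : A -> bool) l : (forall x, p x = q x) -> filter p l = filter q l.
Proof. intros H; induction l; simpl; auto. rewrite H, IHl; auto. Qed.

Lemma sum_colW2_FS f eta Lam n : forall i j K i2 v lam, length K = n ->
  Csum (map (fun l => colW2 f eta Lam i l i2 K v lam)
     (filter (fun l => (sumZ l =? j)%Z) (bits n))) = FS f eta Lam i j K i2 v lam.
Proof.
  induction n; intros i j K i2 v lam HK.
  - destruct K; [|discriminate]. cbn [bits filter sumZ fold_right map Csum FS].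
    destruct (Z.eqb_spec 0 j) as [<-|Hj]; simpl.
    + unfold colW2; simpl. destruct (Z.eqb_spec i i2) as [<-|]; simpl;
        [destruct (0 <=? i)%Z|]; simpl; ring.
    + destruct (Z.eqb_spec j 0); [lia|]. reflexivity.
  - destruct K as [|b K']; [discriminate|]. simpl in HK. injection HK as HK.
    cbn [bits]. rewrite filter_app, !filter_map_comm, map_app, Csum_app, !map_map.
    rewrite (filter_ext' (fun x => (sumZ (0%Z :: x) =? j)%Z) (fun x => (sumZ x =? j)%Z))
      by (intros x; rewrite sumZ_cons; f_equal; lia).
    rewrite (filter_ext' (fun x => (sumZ (1%Z :: x) =? j)%Z) (fun x => (sumZ x =? j - 1)%Z))
      by (intros x; rewrite sumZ_cons; destruct (Z.eqb_spec (1 + sumZ x) j);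
          destruct (Z.eqb_spec (sumZ x) (j - 1)); auto; lia).
    cbn [FS]. f_equal.
    + rewrite (Csum_map_ext_in _ (fun l => W1 f eta i 0 (i + 0 - b) b v
         (shl eta lam (2 * j - Z.of_nat (length K'))) Lam *
         colW2 f eta Lam (i + 0 - b) l i2 K' (v + CZ 2 * eta) lam)).
      * rewrite Csum_map_scal, IHn by auto. reflexivity.
      * intros l Hl. apply filter_In in Hl. destruct Hl as [Hl Hs].
        apply Z.eqb_eq in Hs. destruct (bits_prop _ _ Hl) as [Hlen H01].
        rewrite colW2_cons, (Phi_shl _ _ _ H01), Hs, Hlen, <- HK. reflexivity.
    + rewrite (Csum_map_ext_in _ (fun l => W1 f eta i 1 (i + 1 - b) b v
         (shl eta lam (2 * (j - 1) - Z.of_nat (length K'))) Lam *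
         colW2 f eta Lam (i + 1 - b) l i2 K' (v + CZ 2 * eta) lam)).
      * rewrite Csum_map_scal, IHn by auto. reflexivity.
      * intros l Hl. apply filter_In in Hl. destruct Hl as [Hl Hs].
        apply Z.eqb_eq in Hs. destruct (bits_prop _ _ Hl) as [Hlen H01].
        rewrite colW2_cons, (Phi_shl _ _ _ H01), Hs, Hlen, <- HK. reflexivity.
Qed.

Lemma fused_FS f eta Lam n i1 j1 i2 K v lam : length K = n ->
  fusedWK f eta Lam n i1 j1 i2 K v lam = FS f eta Lam i1 j1 K i2 v lam.
Proof.
  intros HK. unfold fusedWK.
  destruct (Z.ltb_spec i1 0).
  - rewrite FS_neg by auto. apply Csum_zero. intros x Hx. unfold colW. destruct (Z.ltb_spec i1 0); [reflexivity|lia].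
  - rewrite <- (sum_colW2_FS f eta Lam n i1 j1 K i2 v lam HK).
    apply Csum_map_ext_in. intros l _. unfold colW, colW2.
    destruct (Z.ltb_spec i1 0); [lia|]. destruct (Z.ltb_spec i2 0); simpl.
    + destruct (colW_aux f eta Lam i1 l K v lam). destruct (Z.leb_spec 0 i2); [lia|].
      rewrite andb_false_r. reflexivity.
    + destruct (colW_aux f eta Lam i1 l K v lam). destruct (Z.leb_spec 0 i2); [|lia].
      rewrite andb_true_r. reflexivity.
Qed.

Lemma FS_jrange f eta Lam K : forall i j i2 v lam,
  (j < 0 \/ j > Z.of_nat (length K))%Z -> FS f eta Lam i j K i2 v lam = C0.
Proof.
  induction K as [|b K IH]; intros i j i2 v lam Hj; cbn [FS length] in *.
  - destruct (Z.eqb_spec j 0); [lia|]. reflexivity.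
  - rewrite Nat2Z.inj_succ in Hj. rewrite !IH by lia. ring.
Qed.

Lemma seq_S0 n : seq 0 (S n) = 0%nat :: map S (seq 0 n).
Proof. simpl. rewrite seq_shift. reflexivity. Qed.

Ltac czr2 := try unfold shl; apply Ceq; unfold Csub, CZ, CR, Cadd, Cmul, Copp, C1, C0; cbn [re im];
  rewrite ?length_app, ?Nat2Z.inj_add; cbn [length];
  repeat rewrite ?plus_IZR, ?minus_IZR, ?mult_IZR, ?opp_IZR, ?Nat2Z.inj_succ, ?succ_IZR; ring.

Lemma FS_split f eta Lam K1 : forall K2 i j i2 v lam N, (length K1 <= N)%nat ->
  FS f eta Lam i j (K1 ++ K2) i2 v lam =
  Csum (map (fun k : nat =>
     FS f eta Lam i (Z.of_nat k) K1 (i + Z.of_nat k - sumZ K1) v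
        (shl eta lam (2 * (j - Z.of_nat k) - Z.of_nat (length K2)))
     * FS f eta Lam (i + Z.of_nat k - sumZ K1) (j - Z.of_nat k) K2 i2
        (v + CZ 2 * eta * CZ (Z.of_nat (length K1))) lam) (seq 0 (N + 1))).
Proof.
  induction K1 as [|b K1 IH]; intros K2 i j i2 v lam N HN.
  - rewrite Nat.add_1_r, seq_S0. cbn [map Csum app FS sumZ fold_right length].
    rewrite Csum_zero.
    2:{ intros x Hx. apply in_map_iff in Hx. destruct Hx as [k [<- _]].
        rewrite Nat2Z.inj_succ. destruct (Z.eqb_spec (Z.succ (Z.of_nat k)) 0); [lia|].
        simpl. ring. }
    destruct (Z.ltb_spec i 0).
    + rewrite !FS_neg by lia. ring.
    + replace (i + Z.of_nat 0 - 0)%Z with i by lia.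
      destruct (Z.leb_spec 0 i); [|lia]. change (Z.of_nat 0) with 0%Z.
      replace (j - 0)%Z with j by lia.
      replace (v + CZ 2 * eta * CZ 0) with v by czr2.
      rewrite !Z.eqb_refl; simpl; ring.
  - destruct N as [|N']; [simpl in HN; lia|]. cbn [length] in HN.
    cbn [app FS].
    rewrite (IH K2 (i+0-b)%Z j i2 (v + CZ 2*eta) lam (S N')) by lia.
    rewrite (IH K2 (i+1-b)%Z (j-1)%Z i2 (v + CZ 2*eta) lam N') by lia.
    symmetry.
    rewrite (Csum_map_ext_in _ (fun k : nat =>
      W1 f eta i 0 (i + 0 - b) b v (shl eta lam (2 * j - Z.of_nat (length (K1 ++ K2)))) Lam *
      (FS f eta Lam (i + 0 - b) (Z.of_nat k) K1 (i + Z.of_nat k - sumZ (b :: K1)) (v + CZ 2 * eta)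
         (shl eta lam (2 * (j - Z.of_nat k) - Z.of_nat (length K2))) *
       FS f eta Lam (i + Z.of_nat k - sumZ (b :: K1)) (j - Z.of_nat k) K2 i2
         (v + CZ 2 * eta * CZ (Z.of_nat (length (b :: K1)))) lam)
      + W1 f eta i 1 (i + 1 - b) b v (shl eta lam (2 * (j - 1) - Z.of_nat (length (K1 ++ K2)))) Lam *
      (FS f eta Lam (i + 1 - b) (Z.of_nat k - 1) K1 (i + Z.of_nat k - sumZ (b :: K1)) (v + CZ 2 * eta)
         (shl eta lam (2 * (j - Z.of_nat k) - Z.of_nat (length K2))) *
       FS f eta Lam (i + Z.of_nat k - sumZ (b :: K1)) (j - Z.of_nat k) K2 i2
         (v + CZ 2 * eta * CZ (Z.of_nat (length (b :: K1)))) lam))).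
    2:{ intros k _. cbn [FS].
        replace (shl eta (shl eta lam (2 * (j - Z.of_nat k) - Z.of_nat (length K2)))
                   (2 * Z.of_nat k - Z.of_nat (length K1)))
          with (shl eta lam (2 * j - Z.of_nat (length (K1 ++ K2)))) by czr2.
        replace (shl eta (shl eta lam (2 * (j - Z.of_nat k) - Z.of_nat (length K2)))
                   (2 * (Z.of_nat k - 1) - Z.of_nat (length K1)))
          with (shl eta lam (2 * (j - 1) - Z.of_nat (length (K1 ++ K2)))) by czr2.
        ring. }
    rewrite Csum_map_add, !Csum_map_scal. f_equal; f_equal.
    + apply Csum_map_ext_in. intros k _. f_equal.
      * f_equal. rewrite sumZ_cons; lia.
      * f_equal. rewrite sumZ_cons; lia. czr2.
    + rewrite Nat.add_1_r, seq_S0. cbn [map Csum].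
      rewrite FS_jrange by lia. rewrite map_map.
      replace (Csum (map (fun k : nat =>
        FS f eta Lam (i + 1 - b) (Z.of_nat (S k) - 1) K1 (i + Z.of_nat (S k) - sumZ (b :: K1))
          (v + CZ 2 * eta) (shl eta lam (2 * (j - Z.of_nat (S k)) - Z.of_nat (length K2))) *
        FS f eta Lam (i + Z.of_nat (S k) - sumZ (b :: K1)) (j - Z.of_nat (S k)) K2 i2
          (v + CZ 2 * eta * CZ (Z.of_nat (length (b :: K1)))) lam) (seq 0 (S N'))))
      with (Csum (map (fun k : nat =>
        FS f eta Lam (i + 1 - b) (Z.of_nat k) K1 (i + 1 - b + Z.of_nat k - sumZ K1) (v + CZ 2 * eta)
          (shl eta lam (2 * (j - 1 - Z.of_nat k) - Z.of_nat (length K2))) *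
        FS f eta Lam (i + 1 - b + Z.of_nat k - sumZ K1) (j - 1 - Z.of_nat k) K2 i2
          (v + CZ 2 * eta + CZ 2 * eta * CZ (Z.of_nat (length K1))) lam) (seq 0 (N' + 1)))).
      * ring.
      * replace (N' + 1)%nat with (S N') by lia. apply Csum_map_ext_in. intros k _. f_equal.
        -- f_equal; rewrite ?sumZ_cons; try lia. f_equal; lia.
        -- f_equal; rewrite ?sumZ_cons; try lia. czr2.
Qed.

Lemma Ceq_dec (x y : CC) : {x = y} + {x <> y}.
Proof.
  destruct x as [a b], y as [c d].
  destruct (Req_dec_T a c) as [<-|H1]; [destruct (Req_dec_T b d) as [<-|H2]|].
  - left; reflexivity.
  - right; intros E; injection E; auto.
  - right; intros E; injection E; auto.
Qed.

Definition mark (f : CC -> CC) := f.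
Ltac normf f a1 a2 a3 a4 a5 a6 :=
  repeat match goal with
  | |- context [f ?x] =>
    let y := fresh "y" in let E := fresh "E" in
    remember x as y eqn:E;
    replace x with (C0 * a1 + C0 * a2 + C0*a3 + C0*a4 + C0*a5 + C0*a6 + x) in E by ring;
    ring_simplify in E;
    change (f y) with (mark f y); subst y
  end; unfold mark.

Ltac nzf f := match goal with H : f ?a <> C0 |- f ?b <> C0 => replace b with a by ring; exact H end.

Section Loc.
Variables (f : CC -> CC) (eta Lam : CC).

Lemma W00 i v l : (0 <= i)%Z -> W1 f eta i 0 i 0 v l Lam =
  f (eta * (Lam - CZ 2 * CZ i) - v) * f (l + CZ 2 * CZ i * eta) / (f (eta * Lam - v) * f l).
Proof. intros H; unfold W1. destruct (Z.ltb_spec i 0); [lia|]. rewrite !Z.eqb_refl. reflexivity. Qed.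

Lemma W10 i v l : (0 <= i)%Z -> W1 f eta i 1 (i + 1) 0 v l Lam =
  f (v + l + eta * (CZ 2 * CZ i + CZ 2 - Lam)) * f (CZ 2 * eta) / (f (eta * Lam - v) * f l).
Proof. intros H; unfold W1. destruct (Z.ltb_spec i 0); [lia|]. rewrite !Z.eqb_refl. reflexivity. Qed.

Lemma W01 i v l : (1 <= i)%Z -> W1 f eta i 0 (i - 1) 1 v l Lam =
  f (l - v + eta * (CZ 2 * CZ i - CZ 2 - Lam)) * f (CZ 2 * eta * (Lam + C1 - CZ i))
      * f (CZ 2 * CZ i * eta) / (f (eta * Lam - v) * f l * f (CZ 2 * eta)).
Proof.
  intros H; unfold W1. destruct (Z.ltb_spec i 0); [lia|]. rewrite !Z.eqb_refl.
  destruct (Z.leb_spec 1 i); [|lia]. reflexivity.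
Qed.

Lemma W01_lt i v l : (i < 1)%Z -> W1 f eta i 0 (i - 1) 1 v l Lam = C0.
Proof.
  intros H; unfold W1. destruct (Z.ltb_spec i 0); [reflexivity|].
  destruct (Z.leb_spec 1 i); [lia|]. cbn. rewrite !andb_false_r. reflexivity.
Qed.

Lemma W11 i v l : (0 <= i)%Z -> W1 f eta i 1 i 1 v l Lam =
  f (eta * (CZ 2 * CZ i - Lam) - v) * f (l + CZ 2 * eta * (CZ i - Lam)) / (f (eta * Lam - v) * f l).
Proof. intros H; unfold W1. destruct (Z.ltb_spec i 0); [lia|]. rewrite !Z.eqb_refl. reflexivity. Qed.

End Loc.

Lemma L0 f eta Lam i v l :
  f (eta * Lam - v) <> C0 -> f (eta * Lam - (v + CZ 2 * eta)) <> C0 -> f (CZ 2 * eta) <> C0 ->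
  f l <> C0 -> f (l + CZ 2 * eta) <> C0 -> f (l - CZ 2 * eta) <> C0 ->
  (0 <= i)%Z ->
  W1 f eta i 0 (i - 1) 1 v (l - CZ 2 * eta) Lam * W1 f eta (i - 1) 0 (i - 1) 0 (v + CZ 2 * eta) l Lam
  = W1 f eta i 0 i 0 v (l - CZ 2 * eta) Lam * W1 f eta i 0 (i - 1) 1 (v + CZ 2 * eta) l Lam.
Proof.
  intros Hd0 Hd1 Hg Hl Hlp Hlm Hi.
  destruct (Z.ltb_spec i 1).
  - rewrite !W01_lt by lia. ring.
  - rewrite !W01, !W00 by lia. rewrite !CZ_sub, !CZ_1.
    normf f eta Lam v l (CZ i) C0.
    field; repeat split; nzf f.
Qed.

Lemma L2 f eta Lam i v l :
  f (eta * Lam - v) <> C0 -> f (eta * Lam - (v + CZ 2 * eta)) <> C0 -> f (CZ 2 * eta) <> C0 ->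
  f l <> C0 -> f (l + CZ 2 * eta) <> C0 -> f (l - CZ 2 * eta) <> C0 ->
  (0 <= i)%Z ->
  W1 f eta i 1 i 1 v (l + CZ 2 * eta) Lam * W1 f eta i 1 (i + 1) 0 (v + CZ 2 * eta) l Lam
  = W1 f eta i 1 (i + 1) 0 v (l + CZ 2 * eta) Lam * W1 f eta (i + 1) 1 (i + 1) 1 (v + CZ 2 * eta) l Lam.
Proof.
  intros Hd0 Hd1 Hg Hl Hlp Hlm Hi.
  rewrite !W11, !W10 by lia. rewrite !CZ_add, !CZ_1.
  normf f eta Lam v l (CZ i) C0.
  field; repeat split; nzf f.
Qed.

Definition PP (f : CC -> CC) (s d : CC) := f (s + d) * f (s - d).

Lemma KEY (f A B : CC -> CC)
  (H : forall s d, f (s + d) * f (s - d) = A s * B d - B s * A d)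
  (l al be v eta : CC) :
  let x := l + al - eta in let y := be + eta in let u := al + eta in let w := v + eta in
  let x2 := l + al + eta in let u2 := al - eta in
  f (l + (eta + eta)) * (PP f x y * PP f (- w) u - PP f x w * PP f y (- u)) +
  f (l - (eta + eta)) * (PP f x2 w * PP f y (- u2) - PP f x2 y * PP f (- w) (- u2)) = C0.
Proof.
  intros x y u w x2 u2.
  set (D := fun s d => A s * B d - B s * A d).
  assert (HP : forall s d, PP f s d = D s d) by (intros; apply H).
  assert (Dsym : forall s d, D s (- d) = D s d).
  { intros s d. rewrite <- !HP. unfold PP.
    replace (s + - d) with (s - d) by ring. replace (s - - d) with (s + d) by ring. ring. }
  assert (Danti : forall s d, D d s = - D s d) by (intros; unfold D; ring).
  rewrite !HP.
  rewrite (Danti u (- w)), (Dsym u w), (Dsym y u), (Dsym y u2), (Dsym (- w) u2), (Danti u2 (- w)),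
    (Dsym u2 w).
  assert (Pl : forall a b c d, D a b * D c d + D a d * D b c = D a c * D b d)
    by (intros; unfold D; ring).
  assert (E1 : D x y * - D u w - D x w * D y u = - (D x u * D y w)).
  { rewrite <- (Pl x y u w). ring. }
  assert (E2 : D x2 w * D y u2 - D x2 y * - D u2 w = D x2 u2 * D y w).
  { rewrite <- (Pl x2 y u2 w). ring. }
  rewrite E1, E2, <- !HP. unfold PP.
  replace (x + u) with (l + al + al) by (unfold x, u; ring).
  replace (x2 + u2) with (l + al + al) by (unfold x2, u2; ring).
  replace (x - u) with (l - (eta + eta)) by (unfold x, u; ring).
  replace (x2 - u2) with (l + (eta + eta)) by (unfold x2, u2; ring).
  ring.
Qed.

Lemma Cmul_sq0 x : x * x = C0 -> x = C0.
Proof.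
  intros E. destruct (Ceq_dec x C0) as [?|Hx]; auto.
  replace x with (x * x / x) by (field; auto). rewrite E. field; auto.
Qed.

Lemma f0_of_H (f A B : CC -> CC)
  (H : forall s d, f (s + d) * f (s - d) = A s * B d - B s * A d) : f C0 = C0.
Proof.
  pose proof (H C0 C0) as E. replace (C0 + C0) with C0 in E by ring.
  replace (C0 - C0) with C0 in E by ring. apply Cmul_sq0. rewrite E. ring.
Qed.

Lemma Csub_eq0 a b : a - b = C0 -> a = b.
Proof. intros E. replace a with ((a - b) + b) by ring. rewrite E. ring. Qed.

Lemma L1 f A B (H : forall s d, f (s + d) * f (s - d) = A s * B d - B s * A d)
  eta Lam i v l :
  f (eta * Lam - v) <> C0 -> f (eta * Lam - (v + CZ 2 * eta)) <> C0 -> f (CZ 2 * eta) <> C0 ->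
  f l <> C0 -> f (l + CZ 2 * eta) <> C0 -> f (l - CZ 2 * eta) <> C0 ->
  (0 <= i)%Z ->
  W1 f eta i 0 (i - 1) 1 v (l + CZ 2 * eta) Lam * W1 f eta (i - 1) 1 (i - 1 + 1) 0 (v + CZ 2 * eta) l Lam
  + W1 f eta i 1 i 1 v (l - CZ 2 * eta) Lam * W1 f eta i 0 i 0 (v + CZ 2 * eta) l Lam
  = W1 f eta i 0 i 0 v (l + CZ 2 * eta) Lam * W1 f eta i 1 i 1 (v + CZ 2 * eta) l Lam
  + W1 f eta i 1 (i + 1) 0 v (l - CZ 2 * eta) Lam * W1 f eta (i + 1) 0 (i + 1 - 1) 1 (v + CZ 2 * eta) l Lam.
Proof.
  intros Hd0 Hd1 Hg Hl Hlp Hlm Hi.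
  assert (f0 : f C0 = C0) by (apply (f0_of_H f A B H)).
  assert (E2 : W1 f eta i 0 (i - 1) 1 v (l + CZ 2 * eta) Lam *
               W1 f eta (i - 1) 1 (i - 1 + 1) 0 (v + CZ 2 * eta) l Lam =
    f ((l + CZ 2 * eta) - v + eta * (CZ 2 * CZ i - CZ 2 - Lam)) * f (CZ 2 * eta * (Lam + C1 - CZ i))
      * f (CZ 2 * CZ i * eta) / (f (eta * Lam - v) * f (l + CZ 2 * eta) * f (CZ 2 * eta)) *
    (f ((v + CZ 2 * eta) + l + eta * (CZ 2 * CZ (i - 1) + CZ 2 - Lam)) * f (CZ 2 * eta)
       / (f (eta * Lam - (v + CZ 2 * eta)) * f l))).
  { destruct (Z.ltb_spec i 1).
    - assert (i = 0%Z) by lia. subst i. rewrite W01_lt by lia.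
      replace (CZ 2 * CZ 0 * eta) with C0 by (rewrite CZ_0; ring). rewrite f0. field.
      repeat split; nzf f.
    - rewrite W01, W10 by lia. reflexivity. }
  rewrite E2. clear E2.
  rewrite !W11, !W00, !W10, W01 by lia.
  rewrite !CZ_sub, !CZ_add, !CZ_1.
  pose proof (KEY f A B H l (eta * (CZ 2 * CZ i - Lam)) (eta * Lam) v eta) as K. cbv zeta in K.
  apply Csub_eq0.
  match type of K with ?KL = C0 =>
    transitivity (KL / (f (eta * Lam - v) * f (eta * Lam - (v + CZ 2 * eta)) * f l *
                        f (l + CZ 2 * eta) * f (l - CZ 2 * eta)));
    [ | rewrite K; field; repeat split; auto ]
  end.
  unfold PP.
  normf f eta Lam v l (CZ i) C0.
  field; repeat split; nzf f.
Qed.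

Section Swap.
Variables (f A B : CC -> CC).
Hypothesis H : forall s d, f (s + d) * f (s - d) = A s * B d - B s * A d.
Variables (eta Lam : CC).
Hypothesis Hg : f (CZ 2 * eta) <> C0.

Definition goodv (v : CC) := forall m : Z, f (eta * Lam - v + CZ 2 * CZ m * eta) <> C0.
Definition goodl (lam : CC) := forall m : Z, f (lam + CZ 2 * CZ m * eta) <> C0.

Lemma goodv_d0 v : goodv v -> f (eta * Lam - v) <> C0.
Proof. intros Hv E. apply (Hv 0%Z). rewrite <- E. f_equal. ring. Qed.
Lemma goodv_d1 v : goodv v -> f (eta * Lam - (v + CZ 2 * eta)) <> C0.
Proof. intros Hv E. apply (Hv (-1)%Z). rewrite <- E. f_equal. ring. Qed.
Lemma goodv_shift v : goodv v -> goodv (v + CZ 2 * eta).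
Proof. intros Hv m E. apply (Hv (m - 1)%Z). rewrite <- E. f_equal. rewrite CZ_sub, CZ_1. ring. Qed.
Lemma goodl_l lam z : goodl lam -> f (shl eta lam z) <> C0.
Proof. intros Hl E. apply (Hl z). rewrite <- E. unfold shl. f_equal. ring. Qed.
Lemma goodl_p lam z : goodl lam -> f (shl eta lam z + CZ 2 * eta) <> C0.
Proof. intros Hl E. apply (Hl (z + 1)%Z). rewrite <- E. unfold shl. f_equal. rewrite CZ_add, CZ_1. ring. Qed.
Lemma goodl_m lam z : goodl lam -> f (shl eta lam z - CZ 2 * eta) <> C0.
Proof. intros Hl E. apply (Hl (z - 1)%Z). rewrite <- E. unfold shl. f_equal. rewrite CZ_sub, CZ_1. ring. Qed.

Lemma FS_swap K i j i2 v lam : goodv v -> goodl lam ->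
  FS f eta Lam i j (1%Z :: 0%Z :: K) i2 v lam = FS f eta Lam i j (0%Z :: 1%Z :: K) i2 v lam.
Proof.
  intros Hv Hl.
  destruct (Z.ltb_spec i 0). { rewrite !FS_neg by lia. reflexivity. }
  cbn [FS length].
  rewrite !Z.add_0_r, !Z.sub_0_r, !Z.sub_add, !Z.add_simpl_r.
  set (n := Z.of_nat (length K)).
  pose proof (goodv_d0 v Hv) as Hd0. pose proof (goodv_d1 v Hv) as Hd1.
  pose proof (L0 f eta Lam i v (shl eta lam (2 * j - n)) Hd0 Hd1 Hg
     (goodl_l _ _ Hl) (goodl_p _ _ Hl) (goodl_m _ _ Hl) ltac:(lia)) as E0.
  pose proof (L1 f A B H eta Lam i v (shl eta lam (2 * (j - 1) - n)) Hd0 Hd1 Hg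
     (goodl_l _ _ Hl) (goodl_p _ _ Hl) (goodl_m _ _ Hl) ltac:(lia)) as E1.
  pose proof (L2 f eta Lam i v (shl eta lam (2 * (j - 1 - 1) - n)) Hd0 Hd1 Hg
     (goodl_l _ _ Hl) (goodl_p _ _ Hl) (goodl_m _ _ Hl) ltac:(lia)) as E2.
  rewrite !Z.sub_add, !Z.add_simpl_r in E1.
  replace (shl eta lam (2 * j - n) - CZ 2 * eta) with
    (shl eta lam (2 * j - Z.of_nat (S (length K)))) in E0 by (unfold n; czr2).
  replace (shl eta lam (2 * (j - 1) - n) + CZ 2 * eta) with
    (shl eta lam (2 * j - Z.of_nat (S (length K)))) in E1 by (unfold n; czr2).
  replace (shl eta lam (2 * (j - 1) - n) - CZ 2 * eta) with
    (shl eta lam (2 * (j - 1) - Z.of_nat (S (length K)))) in E1 by (unfold n; czr2).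
  replace (shl eta lam (2 * (j - 1 - 1) - n) + CZ 2 * eta) with
    (shl eta lam (2 * (j - 1) - Z.of_nat (S (length K)))) in E2 by (unfold n; czr2).
  set (F0 := FS f eta Lam (i - 1) j K i2 (v + CZ 2 * eta + CZ 2 * eta) lam).
  set (F1 := FS f eta Lam i (j - 1) K i2 (v + CZ 2 * eta + CZ 2 * eta) lam).
  set (F2 := FS f eta Lam (i + 1) (j - 1 - 1) K i2 (v + CZ 2 * eta + CZ 2 * eta) lam).
  apply Csub_eq0.
  match type of E0 with ?a0 = ?b0 => match type of E1 with ?a1 = ?b1 =>
  match type of E2 with ?a2 = ?b2 =>
    transitivity ((a0 - b0) * F0 + (a1 - b1) * F1 + (a2 - b2) * F2);
      [ring | rewrite E0, E1, E2; ring]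
  end end end.
Qed.
End Swap.

Section Canon.
Variables (f A B : CC -> CC).
Hypothesis H : forall s d, f (s + d) * f (s - d) = A s * B d - B s * A d.
Variables (eta Lam : CC).
Hypothesis Hg : f (CZ 2 * eta) <> C0.
Variables (i2 : Z) (lam : CC).
Hypothesis Hl : goodl f eta lam.

Definition FSeq (K K' : list Z) := forall i j v, goodv f eta Lam v ->
  FS f eta Lam i j K i2 v lam = FS f eta Lam i j K' i2 v lam.

Lemma FS_cons_ext b K K' : length K = length K' -> FSeq K K' -> FSeq (b :: K) (b :: K').
Proof.
  intros HL E i j v Hv. cbn [FS]. rewrite HL.
  rewrite !E by (apply goodv_shift; auto). reflexivity.
Qed.

Lemma FSeq_trans K1 K2 K3 : FSeq K1 K2 -> FSeq K2 K3 -> FSeq K1 K3.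
Proof. intros E1 E2 i j v Hv. rewrite E1, E2 by auto. reflexivity. Qed.

Lemma FS_bubble p R : FSeq (0%Z :: repeat 1%Z p ++ R) (repeat 1%Z p ++ 0%Z :: R).
Proof.
  induction p.
  - intros i j v Hv. reflexivity.
  - apply FSeq_trans with (1%Z :: 0%Z :: repeat 1%Z p ++ R).
    + intros i j v Hv. cbn [repeat app]. symmetry. apply FS_swap with (A := A) (B := B); auto.
    + cbn [repeat app]. apply FS_cons_ext; auto.
      cbn [length]. rewrite !length_app, !repeat_length. cbn [length]. lia.
Qed.

Lemma FS_canon K : Forall Z01 K ->
  FSeq K (repeat 1%Z (Z.to_nat (sumZ K)) ++ repeat 0%Z (length K - Z.to_nat (sumZ K))).
Proof.
  induction 1 as [|b K Hb HK IH].
  - intros i j v Hv. reflexivity.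
  - assert (Hs : (0 <= sumZ K <= Z.of_nat (length K))%Z).
    { clear IH. induction HK; cbn [sumZ fold_right length]; [lia|].
      unfold sumZ in IHHK; destruct H0 as [-> | ->]; rewrite Nat2Z.inj_succ; lia. }
    apply FSeq_trans with (b :: repeat 1%Z (Z.to_nat (sumZ K)) ++ repeat 0%Z (length K - Z.to_nat (sumZ K))).
    + apply FS_cons_ext; auto. rewrite length_app, !repeat_length. lia.
    + rewrite sumZ_cons. destruct Hb as [-> | ->].
      * replace (Z.to_nat (0 + sumZ K)) with (Z.to_nat (sumZ K)) by (f_equal; lia).
        eapply FSeq_trans. apply FS_bubble.
        replace (length (0%Z :: K) - Z.to_nat (sumZ K))%nat with (S (length K - Z.to_nat (sumZ K))) by
          (cbn [length]; lia).
        intros i j v Hv. reflexivity.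
      * replace (Z.to_nat (1 + sumZ K)) with (S (Z.to_nat (sumZ K))) by lia.
        replace (length (1%Z :: K) - S (Z.to_nat (sumZ K)))%nat with (length K - Z.to_nat (sumZ K))%nat
          by (cbn [length]; lia).
        intros i j v Hv. reflexivity.
Qed.
End Canon.

Lemma sumZ_repeat1 n : sumZ (repeat 1%Z n) = Z.of_nat n.
Proof. induction n; cbn [repeat]; [reflexivity|]. rewrite sumZ_cons, IHn. lia. Qed.

Theorem main_comb (f A B : CC -> CC)
  (H : forall s d, f (s + d) * f (s - d) = A s * B d - B s * A d)
  (eta Lam v lam : CC)
  (Heta : f (CZ 2 * eta) <> C0)
  (Hlam : forall m : Z, f (lam + CZ 2 * CZ m * eta) <> C0)
  (Hv : forall m : Z, f (eta * Lam - v + CZ 2 * CZ m * eta) <> C0)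
  (J : nat) (i1 j1 i2 j2 : nat) (Hj2 : (j2 <= J)%nat)
  (K : list Z) (HKlen : length K = J) (HK01 : Forall (fun x => x = 0%Z \/ x = 1%Z) K)
  (HKsum : sumZ K = Z.of_nat j2) :
  fusedWK f eta Lam J (Z.of_nat i1) (Z.of_nat j1) (Z.of_nat i2) K v lam =
  Csum (map (fun k : nat =>
     let kz := Z.of_nat k in
     let m := (Z.of_nat i1 + kz - Z.of_nat j2)%Z in
     fusedW f eta Lam j2 (Z.of_nat i1) kz m (Z.of_nat j2) v
        (lam - CZ 2 * eta * CZ (Z.of_nat J - 2 * Z.of_nat j1 - Z.of_nat j2 + 2 * kz))
     * fusedW f eta Lam (J - j2) m (Z.of_nat j1 - kz) (Z.of_nat i2) 0
        (v + CZ 2 * eta * CZ (Z.of_nat j2)) lam)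
   (seq 0 (J + 1))).
Proof.
  rewrite (fused_FS _ _ _ _ _ _ _ _ _ _ HKlen).
  rewrite (FS_canon f A B H eta Lam Heta (Z.of_nat i2) lam Hlam K HK01) by exact Hv.
  rewrite HKsum, HKlen, Nat2Z.id.
  rewrite (FS_split f eta Lam (repeat 1%Z j2) (repeat 0%Z (J - j2)) _ _ _ _ _ J)
    by (rewrite repeat_length; lia).
  apply Csum_map_ext_in. intros k _. cbv zeta.
  unfold fusedW.
  destruct (Z.ltb_spec (Z.of_nat j2) 0); [lia|].
  destruct (Z.ltb_spec (Z.of_nat j2) (Z.of_nat j2)); [lia|].
  destruct (Z.ltb_spec 0 0); [lia|].
  destruct (Z.ltb_spec (Z.of_nat (J - j2)) 0); [lia|]. cbn [orb].
  rewrite !fused_FS by (rewrite length_app, !repeat_length; lia).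
  rewrite Nat2Z.id, Nat.sub_diag, Nat.sub_0_r. cbn [repeat app]. rewrite app_nil_r.
  rewrite sumZ_repeat1, !repeat_length.
  f_equal.
  - f_equal. unfold shl. rewrite Nat2Z.inj_sub by lia.
    replace (2 * (Z.of_nat j1 - Z.of_nat k) - (Z.of_nat J - Z.of_nat j2))%Z with
      (- (Z.of_nat J - 2 * Z.of_nat j1 - Z.of_nat j2 + 2 * Z.of_nat k))%Z by lia.
    rewrite CZ_opp. ring.
Qed.

Lemma Cexp_add a b : Cexp (a + b) = Cexp a * Cexp b.
Proof.
  apply Ceq; unfold Cexp, Cadd, Cmul; cbn [re im]; rewrite exp_plus, ?cos_plus, ?sin_plus; ring.
Qed.

Lemma Cexp_0 : Cexp C0 = C1.
Proof. apply Ceq; unfold Cexp, C0, C1, CR; cbn [re im]; rewrite exp_0, ?cos_0, ?sin_0; ring. Qed.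

Lemma Cexp_nz a : Cexp a <> C0.
Proof.
  intros E. assert (Cexp (- a) * Cexp a = C1) as E2.
  { rewrite <- Cexp_add. replace (- a + a) with C0 by ring. apply Cexp_0. }
  rewrite E in E2. apply C1_neq_C0. rewrite <- E2. ring.
Qed.

Lemma Cexp_opp a : Cexp (- a) = C1 / Cexp a.
Proof.
  assert (Cexp (- a) * Cexp a = C1) as E2.
  { rewrite <- Cexp_add. replace (- a + a) with C0 by ring. apply Cexp_0. }
  pose proof (Cexp_nz a). rewrite <- E2. field. auto.
Qed.

Lemma two_i_nz : CZ 2 * Ci <> C0.
Proof.
  intros E. assert (im (CZ 2 * Ci) = im C0) by (rewrite E; auto).
  unfold CZ, CR, Ci, Cmul, C0 in H; cbn [re im] in H. simpl in H. lra.
Qed.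

Lemma sinpi_H : forall s d, sinpi (s + d) * sinpi (s - d) =
  (sinpi s * sinpi s) * C1 - C1 * (sinpi d * sinpi d).
Proof.
  intros s d. unfold sinpi.
  replace (Ci * CPI * (s + d)) with (Ci * CPI * s + Ci * CPI * d) by ring.
  replace (Ci * CPI * (s - d)) with (Ci * CPI * s + - (Ci * CPI * d)) by ring.
  rewrite !Cexp_opp, !Cexp_add, !Cexp_opp.
  pose proof (Cexp_nz (Ci * CPI * s)). pose proof (Cexp_nz (Ci * CPI * d)).
  pose proof two_i_nz.
  field; repeat split; auto. all: intro E; apply two_i_nz; rewrite E; ring.
Qed.

Definition Cn (x : CC) : R := (Rabs (re x) + Rabs (im x))%R.

Lemma Cn_ge0 x : (0 <= Cn x)%R.
Proof. unfold Cn. pose proof (Rabs_pos (re x)); pose proof (Rabs_pos (im x)); lra. Qed.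

Lemma Cn_add x y : (Cn (x + y)%CC <= Cn x + Cn y)%R.
Proof.
  unfold Cn, Cadd; cbn [re im].
  pose proof (Rabs_triang (re x) (re y)); pose proof (Rabs_triang (im x) (im y)); lra.
Qed.

Lemma Cn_opp x : Cn (- x)%CC = Cn x.
Proof. unfold Cn, Copp; cbn [re im]. rewrite !Rabs_Ropp. reflexivity. Qed.

Lemma Cn_sub x y : (Cn (x - y)%CC <= Cn x + Cn y)%R.
Proof. unfold Csub. pose proof (Cn_add x (- y)). rewrite Cn_opp in H. exact H. Qed.

Lemma Cn_mul x y : (Cn (x * y)%CC <= Cn x * Cn y)%R.
Proof.
  unfold Cn, Cmul; cbn [re im].
  pose proof (Rabs_triang (re x * re y) (- (im x * im y))).
  pose proof (Rabs_triang (re x * im y) (im x * re y)).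
  rewrite Rabs_Ropp, !Rabs_mult in H. rewrite !Rabs_mult in H0.
  unfold Rminus. pose proof (Rabs_pos (re x)); pose proof (Rabs_pos (im x));
  pose proof (Rabs_pos (re y)); pose proof (Rabs_pos (im y)). nra.
Qed.

Lemma Cn_re x : (Rabs (re x) <= Cn x)%R.
Proof. unfold Cn. pose proof (Rabs_pos (im x)); lra. Qed.
Lemma Cn_im x : (Rabs (im x) <= Cn x)%R.
Proof. unfold Cn. pose proof (Rabs_pos (re x)); lra. Qed.

Lemma Cn_small x : (forall e, (0 < e)%R -> (Cn x <= e)%R) -> x = C0.
Proof.
  intros H. pose proof (Cn_ge0 x).
  assert (Cn x = 0%R).
  { destruct (Rle_lt_dec (Cn x) 0); [lra|]. specialize (H (Cn x / 2)%R ltac:(lra)). lra. }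
  unfold Cn in H1. pose proof (Rabs_pos (re x)); pose proof (Rabs_pos (im x)).
  apply Ceq; unfold C0, CR; cbn [re im].
  - destruct (Req_dec (re x) 0); auto. exfalso. apply (Rabs_no_R0 (re x)); auto. lra.
  - destruct (Req_dec (im x) 0); auto. exfalso. apply (Rabs_no_R0 (im x)); auto. lra.
Qed.

Lemma Cn_Cexp w : (Cn (Cexp w) <= 2 * exp (re w))%R.
Proof.
  unfold Cn, Cexp; cbn [re im]. rewrite !Rabs_mult, Rabs_right by (left; apply exp_pos).
  pose proof (exp_pos (re w)). pose proof (COS_bound (im w)); pose proof (SIN_bound (im w)).
  assert (Rabs (cos (im w)) <= 1)%R by (apply Rabs_le; lra).
  assert (Rabs (sin (im w)) <= 1)%R by (apply Rabs_le; lra). nra.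
Qed.

Definition Rsum (l : list R) : R := fold_right Rplus 0%R l.

Lemma Rsum_app l1 l2 : Rsum (l1 ++ l2) = (Rsum l1 + Rsum l2)%R.
Proof. induction l1; simpl. ring. unfold Rsum in *. simpl. rewrite IHl1. ring. Qed.

Definition RS (a : Z -> CC) (N : nat) : R :=
  Rsum (map (fun n => Cn (a (Z.of_nat n - Z.of_nat N)%Z)) (seq 0 (2 * N + 1))).

Lemma sym_list {X} (a : Z -> X) N :
  map (fun n => a (Z.of_nat n - Z.of_nat (S N))%Z) (seq 0 (2 * S N + 1)) =
  a (- Z.of_nat (S N))%Z :: map (fun n => a (Z.of_nat n - Z.of_nat N)%Z) (seq 0 (2 * N + 1))
    ++ [a (Z.of_nat (S N))].
Proof.
  replace (2 * S N + 1)%nat with (S ((2 * N + 1) + 1)) by lia.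
  rewrite seq_S0, map_cons, seq_app, !map_app, !map_map. cbn [seq map].
  replace (Z.of_nat 0 - Z.of_nat (S N))%Z with (- Z.of_nat (S N))%Z by lia.
  replace (Z.of_nat (S (0 + (2 * N + 1))) - Z.of_nat (S N))%Z with (Z.of_nat (S N)) by lia.
  f_equal. f_equal. apply map_ext. intros n. f_equal. lia.
Qed.

Lemma Cpartial_S a N : Cpartial a (S N) =
  a (- Z.of_nat (S N))%Z + Cpartial a N + a (Z.of_nat (S N)).
Proof.
  unfold Cpartial. rewrite sym_list. cbn [Csum]. rewrite Csum_app. cbn [Csum]. ring.
Qed.

Lemma RS_S a N : RS a (S N) = (Cn (a (- Z.of_nat (S N))%Z) + RS a N + Cn (a (Z.of_nat (S N))))%R.
Proof.
  unfold RS. pose proof (sym_list (fun z => Cn (a z)) N) as E. cbv beta in E. rewrite E.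
  unfold Rsum at 1. cbn [fold_right].
  fold (Rsum (map (fun n => Cn (a (Z.of_nat n - Z.of_nat N)%Z)) (seq 0 (2 * N + 1)) ++
     [Cn (a (Z.of_nat (S N)))])). rewrite Rsum_app. unfold Rsum at 3. simpl. unfold Rsum. ring.
Qed.

Lemma RS_mono a N M : (N <= M)%nat -> (RS a N <= RS a M)%R.
Proof.
  induction 1. lra. rewrite RS_S. pose proof (Cn_ge0 (a (- Z.of_nat (S m))%Z)).
  pose proof (Cn_ge0 (a (Z.of_nat (S m)))). lra.
Qed.

Lemma Cpartial_diff a N M : (N <= M)%nat ->
  (Cn (Cpartial a M - Cpartial a N)%CC <= RS a M - RS a N)%R.
Proof.
  induction 1.
  - replace (Cpartial a N - Cpartial a N) with C0 by ring. unfold Cn, C0, CR; simpl.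
    rewrite Rabs_R0. lra.
  - rewrite Cpartial_S, RS_S.
    replace (a (- Z.of_nat (S m))%Z + Cpartial a m + a (Z.of_nat (S m)) - Cpartial a N)
      with (a (- Z.of_nat (S m))%Z + a (Z.of_nat (S m)) + (Cpartial a m - Cpartial a N)) by ring.
    pose proof (Cn_add (a (- Z.of_nat (S m))%Z + a (Z.of_nat (S m))) (Cpartial a m - Cpartial a N)).
    pose proof (Cn_add (a (- Z.of_nat (S m))%Z) (a (Z.of_nat (S m)))). lra.
Qed.

Definition summable (a : Z -> CC) := exists M, forall N, (RS a N <= M)%R.

Definition Ccn (u : nat -> CC) (l : CC) :=
  forall e, (0 < e)%R -> exists N, forall n, (N <= n)%nat -> (Cn (u n - l)%CC <= e)%R.

Lemma RS_cv a : summable a -> { Ra : R | Un_cv (RS a) Ra }.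
Proof.
  intros Hs. apply growing_cv.
  - intros n. apply RS_mono. lia.
  - destruct Hs as [M HM]. exists M. intros x [n ->]. apply HM.
Defined.

Lemma summable_cv a : summable a -> Ccv (Cpartial a) (CsumZ a).
Proof.
  intros Hs. unfold CsumZ. apply epsilon_spec.
  destruct (RS_cv a Hs) as [Ra HRa].
  pose proof (CV_Cauchy _ (exist _ Ra HRa)) as HC.
  assert (Hdiff : forall n m, (Rabs (re (Cpartial a n) - re (Cpartial a m)) <= Rabs (RS a n - RS a m))%R
    /\ (Rabs (im (Cpartial a n) - im (Cpartial a m)) <= Rabs (RS a n - RS a m))%R).
  { intros n m.
    assert (Hre : forall x y, (Rabs (re x - re y) <= Cn (x - y)%CC)%R).
    { intros x y. pose proof (Cn_re (x - y)). unfold Csub, Cadd, Copp in H; cbn [re im] in H. exact H. }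
    assert (Him : forall x y, (Rabs (im x - im y) <= Cn (x - y)%CC)%R).
    { intros x y. pose proof (Cn_im (x - y)). unfold Csub, Cadd, Copp in H; cbn [re im] in H. exact H. }
    destruct (le_ge_dec n m) as [Hnm|Hnm].
    - pose proof (Cpartial_diff a n m Hnm). pose proof (RS_mono a n m Hnm).
      rewrite (Rabs_minus_sym (re _)), (Rabs_minus_sym (im _)), (Rabs_minus_sym (RS a n)).
      rewrite (Rabs_right (RS a m - RS a n)) by lra.
      pose proof (Hre (Cpartial a m) (Cpartial a n)). pose proof (Him (Cpartial a m) (Cpartial a n)).
      split; lra.
    - pose proof (Cpartial_diff a m n Hnm). pose proof (RS_mono a m n Hnm).
      rewrite (Rabs_right (RS a n - RS a m)) by lra.
      pose proof (Hre (Cpartial a n) (Cpartial a m)). pose proof (Him (Cpartial a n) (Cpartial a m)).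
      split; lra. }
  assert (Cre : Cauchy_crit (fun n => re (Cpartial a n))).
  { intros e He. destruct (HC e He) as [N HN]. exists N. intros n m Hn Hm.
    specialize (HN n m Hn Hm). unfold R_dist in *. destruct (Hdiff n m). lra. }
  assert (Cim : Cauchy_crit (fun n => im (Cpartial a n))).
  { intros e He. destruct (HC e He) as [N HN]. exists N. intros n m Hn Hm.
    specialize (HN n m Hn Hm). unfold R_dist in *. destruct (Hdiff n m). lra. }
  destruct (R_complete _ Cre) as [lr Hr]. destruct (R_complete _ Cim) as [li Hi].
  exists (mkC lr li). split; assumption.
Qed.

Lemma Ccv_Ccn u l : Ccv u l -> Ccn u l.
Proof.
  intros [Hr Hi] e He. destruct (Hr (e/2)%R ltac:(lra)) as [N1 H1].
  destruct (Hi (e/2)%R ltac:(lra)) as [N2 H2]. exists (N1 + N2)%nat. intros n Hn.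
  specialize (H1 n ltac:(lia)). specialize (H2 n ltac:(lia)). unfold R_dist in *.
  unfold Cn, Csub, Cadd, Copp; cbn [re im]. unfold Rminus in H1, H2. lra.
Qed.

Lemma CsumZ_unique a s : Ccv (Cpartial a) s -> CsumZ a = s.
Proof.
  intros Hs. assert (H1 : Ccv (Cpartial a) (CsumZ a)).
  { unfold CsumZ. apply epsilon_spec. exists s; auto. }
  destruct Hs as [Hr Hi], H1 as [Hr' Hi']. apply Ceq.
  - eapply UL_sequence; eauto.
  - eapply UL_sequence; eauto.
Qed.

Lemma Ccn_mul u w a b : Ccn u a -> Ccn w b -> Ccn (fun n => u n * w n) (a * b).
Proof.
  intros Hu Hw e He.
  set (K := (Cn a + Cn b + 1)%R).
  assert (HK : (0 < K)%R) by (unfold K; pose proof (Cn_ge0 a); pose proof (Cn_ge0 b); lra).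
  set (d := Rmin 1 (e / (2 * K))).
  assert (Hd : (0 < d)%R) by (unfold d; apply Rmin_pos; [lra|apply Rdiv_lt_0_compat; lra]).
  assert (Hd1 : (d <= 1)%R) by apply Rmin_l.
  assert (Hd2 : (d <= e / (2 * K))%R) by apply Rmin_r.
  destruct (Hu d Hd) as [N1 H1]. destruct (Hw d Hd) as [N2 H2].
  exists (N1 + N2)%nat. intros n Hn.
  specialize (H1 n ltac:(lia)). specialize (H2 n ltac:(lia)).
  replace (u n * w n - a * b) with ((u n - a) * w n + a * (w n - b)) by ring.
  pose proof (Cn_add ((u n - a) * w n) (a * (w n - b))).
  pose proof (Cn_mul (u n - a) (w n)). pose proof (Cn_mul a (w n - b)).
  assert (Cn (w n) <= Cn b + 1)%R.
  { replace (w n) with ((w n - b) + b) by ring. pose proof (Cn_add (w n - b) b). lra. }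
  pose proof (Cn_ge0 (u n - a)). pose proof (Cn_ge0 (w n)). pose proof (Cn_ge0 a).
  assert (d * K <= e / 2)%R.
  { replace (e / 2)%R with (e / (2 * K) * K)%R by (field; lra). apply Rmult_le_compat_r; lra. }
  assert (Cn (u n - a)%CC * Cn (w n) <= d * K)%R.
  { apply Rle_trans with (d * (Cn b + 1))%R. apply Rmult_le_compat; lra. unfold K.
    apply Rmult_le_compat_l; lra. }
  assert (Cn a * Cn (w n - b)%CC <= d * K)%R.
  { apply Rle_trans with (Cn a * d)%R. apply Rmult_le_compat_l; lra.
    rewrite Rmult_comm. apply Rmult_le_compat_l; [lra|]. unfold K. pose proof (Cn_ge0 b). lra. }
  lra.
Qed.

Definition pdec : forall p q : Z * Z, {p = q} + {p <> q}.
Proof. decide equality; apply Z.eq_dec. Defined.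

Lemma NoDup_map_inj {A B} (f : A -> B) l : (forall x y, f x = f y -> x = y) -> NoDup l -> NoDup (map f l).
Proof. intros Hf Hl. apply NoDup_map_NoDup_ForallPairs; auto. intros x y _ _. apply Hf. Qed.

Lemma NoDup_prod {A B} (l1 : list A) (l2 : list B) : NoDup l1 -> NoDup l2 -> NoDup (list_prod l1 l2).
Proof.
  induction 1 as [|a l1 Ha Hl1 IH]; intros Hl2; simpl; [constructor|].
  apply NoDup_app; auto.
  - apply NoDup_map_inj; auto. intros x y E; injection E; auto.
  - intros [x y] Hx Hy. apply in_map_iff in Hx. destruct Hx as [z [E _]]. injection E as <- <-.
    apply in_prod_iff in Hy. tauto.
Qed.

Definition zr (N : nat) : list Z := map (fun n => (Z.of_nat n - Z.of_nat N)%Z) (seq 0 (2 * N + 1)).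

Lemma in_zr N j : In j (zr N) <-> (- Z.of_nat N <= j <= Z.of_nat N)%Z.
Proof.
  unfold zr. rewrite in_map_iff. split.
  - intros [n [<- Hn]]. apply in_seq in Hn. lia.
  - intros Hj. exists (Z.to_nat (j + Z.of_nat N)). split; [lia|]. apply in_seq. lia.
Qed.

Lemma NoDup_zr N : NoDup (zr N).
Proof. apply NoDup_map_inj; [intros; lia|apply seq_NoDup]. Qed.

Definition box N := list_prod (zr N) (zr N).

Lemma in_box N j l : In (j, l) (box N) <-> (- Z.of_nat N <= j <= Z.of_nat N /\ - Z.of_nat N <= l <= Z.of_nat N)%Z.
Proof. unfold box. rewrite in_prod_iff, !in_zr. tauto. Qed.

Lemma NoDup_box N : NoDup (box N).
Proof. apply NoDup_prod; apply NoDup_zr. Qed.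

Lemma Cpartial_zr a N : Cpartial a N = Csum (map a (zr N)).
Proof. unfold Cpartial, zr. rewrite map_map. reflexivity. Qed.

Lemma RS_zr a N : RS a N = Rsum (map (fun j => Cn (a j)) (zr N)).
Proof. unfold RS, zr. rewrite map_map. reflexivity. Qed.

Lemma Csum_prod (a b : Z -> CC) l1 l2 :
  Csum (map (fun p => a (fst p) * b (snd p)) (list_prod l1 l2)) = Csum (map a l1) * Csum (map b l2).
Proof.
  induction l1; simpl. ring. rewrite map_app, Csum_app, IHl1, map_map. simpl.
  rewrite (Csum_map_scal (a a0) b). ring.
Qed.

Lemma Rsum_map_scal {A} (c : R) (g : A -> R) l :
  Rsum (map (fun x => c * g x)%R l) = (c * Rsum (map g l))%R.
Proof. induction l; unfold Rsum in *; simpl. ring. rewrite IHl; ring. Qed.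

Lemma Rsum_cons x l : Rsum (x :: l) = (x + Rsum l)%R.
Proof. reflexivity. Qed.

Lemma Rsum_prod (a b : Z -> R) l1 l2 :
  Rsum (map (fun p => a (fst p) * b (snd p))%R (list_prod l1 l2)) = (Rsum (map a l1) * Rsum (map b l2))%R.
Proof.
  induction l1; simpl. unfold Rsum; simpl; ring.
  rewrite map_app, Rsum_app, IHl1, map_map. simpl.
  rewrite (Rsum_map_scal (a a0) b). ring.
Qed.

Lemma Csum_perm (l l' : list CC) : Permutation l l' -> Csum l = Csum l'.
Proof. induction 1; simpl; try congruence. ring. Qed.

Lemma Rsum_perm (l l' : list R) : Permutation l l' -> Rsum l = Rsum l'.
Proof. induction 1; unfold Rsum in *; simpl; try congruence. ring. Qed.

Lemma Rsum_nonneg {A} (w : A -> R) l : (forall x, 0 <= w x)%R -> (0 <= Rsum (map w l))%R.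
Proof. intros Hw; induction l; unfold Rsum in *; simpl. lra. specialize (Hw a). lra. Qed.

Definition notin (L : list (Z * Z)) (p : Z * Z) : bool := if in_dec pdec p L then false else true.

Lemma perm_split L1 L : NoDup L1 -> NoDup L -> incl L1 L -> Permutation L (L1 ++ filter (notin L1) L).
Proof.
  intros H1 H Hi. apply NoDup_Permutation; auto.
  - apply NoDup_app; auto. apply NoDup_filter; auto.
    intros p Hp Hq. apply filter_In in Hq. unfold notin in Hq. destruct (in_dec pdec p L1); [|tauto].
    destruct Hq; discriminate.
  - intros p. rewrite in_app_iff, filter_In. unfold notin. destruct (in_dec pdec p L1); split; intros;
      try tauto; intuition; try discriminate.
Qed.

Lemma Csum_norm_le (T : Z * Z -> CC) (w : Z * Z -> R) L : (forall p, Cn (T p) <= w p)%R ->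
  (Cn (Csum (map T L)) <= Rsum (map w L))%R.
Proof.
  intros Hw; induction L; unfold Rsum in *; simpl.
  - unfold Cn, C0, CR; simpl. rewrite Rabs_R0. lra.
  - pose proof (Cn_add (T a) (Csum (map T L))). specialize (Hw a). lra.
Qed.

Lemma Rsum_incl_le (w : Z * Z -> R) L1 L2 : (forall p, 0 <= w p)%R -> NoDup L1 -> NoDup L2 -> incl L1 L2 ->
  (Rsum (map w L1) <= Rsum (map w L2))%R.
Proof.
  intros Hw H1 H2 Hi. rewrite (Rsum_perm _ _ (Permutation_map w (perm_split L1 L2 H1 H2 Hi))).
  rewrite map_app, Rsum_app. pose proof (Rsum_nonneg w (filter (notin L1) L2) Hw). lra.
Qed.

Lemma sandwich (T : Z * Z -> CC) (w : Z * Z -> R) L n M :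
  (forall p, Cn (T p) <= w p)%R -> NoDup L -> incl (box n) L -> incl L (box M) ->
  (Cn (Csum (map T L) - Csum (map T (box n)))%CC <= Rsum (map w (box M)) - Rsum (map w (box n)))%R.
Proof.
  intros Hw HL H1 H2.
  assert (Hw0 : forall p, (0 <= w p)%R) by (intros p; pose proof (Cn_ge0 (T p)); specialize (Hw p); lra).
  pose proof (perm_split (box n) L (NoDup_box n) HL H1) as P1.
  pose proof (perm_split (box n) (box M) (NoDup_box n) (NoDup_box M) (fun p Hp => H2 p (H1 p Hp))) as P2.
  rewrite (Csum_perm _ _ (Permutation_map T P1)).
  rewrite (Rsum_perm _ _ (Permutation_map w P2)).
  rewrite !map_app, Csum_app, Rsum_app.
  replace (Csum (map T (box n)) + Csum (map T (filter (notin (box n)) L)) - Csum (map T (box n)))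
    with (Csum (map T (filter (notin (box n)) L))) by ring.
  pose proof (Csum_norm_le T w (filter (notin (box n)) L) Hw).
  assert (Rsum (map w (filter (notin (box n)) L)) <= Rsum (map w (filter (notin (box n)) (box M))))%R.
  { apply Rsum_incl_le; auto; try (apply NoDup_filter; auto; apply NoDup_box).
    intros p Hp. apply filter_In in Hp. apply filter_In. destruct Hp; split; auto. }
  lra.
Qed.

Lemma RS_ge0 a N : (0 <= RS a N)%R.
Proof. rewrite RS_zr. apply Rsum_nonneg. intros; apply Cn_ge0. Qed.

Lemma region a b : summable a -> summable b ->
  forall e, (0 < e)%R -> exists n0, forall n L M, (n0 <= n)%nat -> NoDup L ->
    incl (box n) L -> incl L (box M) ->
    (Cn (Csum (map (fun p => a (fst p) * b (snd p)) L) - CsumZ a * CsumZ b)%CC <= e)%R.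
Proof.
  intros Ha Hb e He.
  destruct (RS_cv a Ha) as [Ra HRa]. destruct (RS_cv b Hb) as [Rb HRb].
  assert (Ga : Un_growing (RS a)) by (intros n; apply RS_mono; lia).
  assert (Gb : Un_growing (RS b)) by (intros n; apply RS_mono; lia).
  pose proof (growing_ineq _ _ Ga HRa) as Ia. pose proof (growing_ineq _ _ Gb HRb) as Ib.
  pose proof (CV_mult _ _ _ _ HRa HRb) as Hab.
  destruct (Hab (e/2)%R ltac:(lra)) as [n1 Hn1].
  pose proof (Ccn_mul _ _ _ _ (Ccv_Ccn _ _ (summable_cv a Ha)) (Ccv_Ccn _ _ (summable_cv b Hb))
     (e/2)%R ltac:(lra)) as [n2 Hn2].
  exists (n1 + n2)%nat. intros n L M Hn HL H1 H2.
  set (T := fun p : Z * Z => a (fst p) * b (snd p)).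
  set (w := fun p : Z * Z => (Cn (a (fst p)) * Cn (b (snd p)))%R).
  assert (Hw : forall p, (Cn (T p) <= w p)%R) by (intros; apply Cn_mul).
  pose proof (sandwich T w L n M Hw HL H1 H2) as S.
  pose proof (Rsum_prod (fun z => Cn (a z)) (fun z => Cn (b z))) as RP. cbv beta in RP.
  unfold w, box in S. rewrite !RP, <- !RS_zr in S.
  unfold T, box in S |- *. rewrite Csum_prod, <- !Cpartial_zr in S.
  specialize (Hn1 n ltac:(lia)). specialize (Hn2 n ltac:(lia)). unfold R_dist in Hn1.
  pose proof (RS_ge0 a M). pose proof (RS_ge0 b M). pose proof (Ia M). pose proof (Ib M).
  assert (RS a M * RS b M <= Ra * Rb)%R by (apply Rmult_le_compat; lra).
  assert (Ra * Rb - RS a n * RS b n <= e / 2)%R.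
  { rewrite Rabs_minus_sym in Hn1. pose proof (Rle_abs (Ra * Rb - RS a n * RS b n)). lra. }
  match goal with |- (Cn (?X - ?Z)%CC <= _)%R =>
    replace (X - Z) with ((X - Cpartial a n * Cpartial b n) + (Cpartial a n * Cpartial b n - Z)) by ring;
    pose proof (Cn_add (X - Cpartial a n * Cpartial b n) (Cpartial a n * Cpartial b n - Z))
  end.
  unfold list_prod in *. lra.
Qed.

Lemma exp_le x y : (x <= y)%R -> (exp x <= exp y)%R.
Proof. intros H. destruct (Rle_lt_or_eq_dec _ _ H). left; apply exp_increasing; auto. subst; lra. Qed.

Lemma gauss_summable (a : Z -> CC) K t c : (0 < t)%R ->
  (forall j, Cn (a j) <= K * exp (- t * IZR j * IZR j + c * Rabs (IZR j)))%R -> summable a.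
Proof.
  intros Ht Hb.
  set (D := ((c + 1) * (c + 1) / (4 * t))%R).
  assert (HK : (0 <= K)%R).
  { specialize (Hb 0%Z). pose proof (Cn_ge0 (a 0%Z)).
    pose proof (exp_pos (- t * IZR 0 * IZR 0 + c * Rabs (IZR 0))).
    destruct (Rle_lt_dec 0 K); auto. nra. }
  set (C := (K * exp D)%R).
  assert (HC : (0 <= C)%R) by (unfold C; pose proof (exp_pos D); nra).
  assert (Hb2 : forall j, (Cn (a j) <= C * exp (- Rabs (IZR j)))%R).
  { intros j. eapply Rle_trans; [apply Hb|]. unfold C. rewrite (Rmult_assoc K), <- exp_plus.
    apply Rmult_le_compat_l; auto. apply exp_le.
    assert (IZR j * IZR j = Rabs (IZR j) * Rabs (IZR j))%R.
    { rewrite <- Rabs_mult. rewrite Rabs_right; [reflexivity|]. apply Rle_ge. nra. }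
    rewrite Rmult_assoc, H. set (x := Rabs (IZR j)). pose proof (Rabs_pos (IZR j)).
    unfold D. assert (0 <= (2 * t * x - (c + 1)) * (2 * t * x - (c + 1)))%R by apply Rle_0_sqr.
    apply (Rmult_le_reg_l (4 * t)); [lra|].
    replace (4 * t * ((c + 1) * (c + 1) / (4 * t) + - x))%R with ((c + 1) * (c + 1) - 4 * t * x)%R
      by (field; lra). match goal with |- (?L <= ?R)%R => assert (R - L = (2 * t * x - (c + 1)) * (2 * t * x - (c + 1)))%R by ring end. lra. }
  assert (He1 : (1 < exp 1)%R) by (pose proof (exp_increasing 0 1 ltac:(lra)) as HH; rewrite exp_0 in HH; exact HH).
  set (B := fun N : nat => (C * (1 + 2 * (1 - exp (- INR N)) / (exp 1 - 1)))%R).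
  assert (HB : forall N, (RS a N <= B N)%R).
  { induction N.
    - unfold RS, B. simpl. unfold Rsum; simpl. replace (Z.of_nat 0 - Z.of_nat 0)%Z with 0%Z by lia.
      rewrite Ropp_0, exp_0. specialize (Hb2 0%Z). rewrite Rabs_R0, Ropp_0, exp_0 in Hb2.
      replace (C * (1 + 2 * (1 - 1) / (exp 1 - 1)))%R with C by (field; lra). lra.
    - rewrite RS_S. pose proof (Hb2 (- Z.of_nat (S N))%Z). pose proof (Hb2 (Z.of_nat (S N))).
      rewrite opp_IZR, Rabs_Ropp in H. rewrite <- INR_IZR_INZ, Rabs_right in H, H0 by (apply Rle_ge, pos_INR).
      unfold B in *. rewrite S_INR in *.
      assert (E : exp (- INR N) = (exp (- (INR N + 1)) * exp 1)%R)
        by (rewrite <- exp_plus; f_equal; ring).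
      rewrite E in IHN.
      set (q := exp (- (INR N + 1))) in *. assert (0 < q)%R by apply exp_pos.
      replace (C * (1 + 2 * (1 - q) / (exp 1 - 1)))%R with
        (C * (1 + 2 * (1 - q * exp 1) / (exp 1 - 1)) + 2 * C * q)%R by (field; lra).
      lra. }
  exists (C * (1 + 2 / (exp 1 - 1)))%R. intros N. eapply Rle_trans; [apply HB|]. unfold B.
  apply Rmult_le_compat_l; auto.
  assert (0 < exp (- INR N))%R by apply exp_pos.
  assert (0 < exp 1 - 1)%R by lra.
  apply Rplus_le_compat_l. unfold Rdiv. apply Rmult_le_compat_r. left; apply Rinv_0_lt_compat; lra.
  lra.
Qed.

Lemma neg_mul_abs a b : (- (a * b) <= Rabs a * Rabs b)%R.
Proof. rewrite <- Rabs_mult. pose proof (Rle_abs (- (a * b))). rewrite Rabs_Ropp in H. lra. Qed.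

Lemma cexp_gauss (w : Z -> CC) T S u v : (0 < T)%R -> u <> 0%R ->
  (forall j, re (w j) = (- T * (u * IZR j + v) * (u * IZR j + v) - S * (u * IZR j + v))%R) ->
  summable (fun j => Cexp (w j)).
Proof.
  intros HT Hu Hw.
  apply (gauss_summable _ (2 * exp (Rabs (S * v))) (T * u * u) (2 * T * Rabs (u * v) + Rabs (S * u))).
  - assert (0 < u * u)%R by (apply Rsqr_pos_lt; auto). nra.
  - intros j. eapply Rle_trans; [apply Cn_Cexp|]. rewrite Rmult_assoc, <- exp_plus.
    apply Rmult_le_compat_l; [lra|]. apply exp_le. rewrite Hw.
    pose proof (neg_mul_abs (2 * T * (u * v)) (IZR j)).
    pose proof (neg_mul_abs (S * u) (IZR j)).
    pose proof (neg_mul_abs (S * v) 1). rewrite Rabs_R1 in H1.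
    rewrite !Rabs_mult in *. rewrite (Rabs_right 2) in H by lra. rewrite (Rabs_right T) in H by lra.
    assert (0 <= T * v * v)%R by (pose proof (Rle_0_sqr v); unfold Rsqr in H2; nra).
    nra.
Qed.

Definition ta (tau z : CC) : Z -> CC := fun j =>
    let h := (CZ j + half)%CC in
    Cexp (CPI * Ci * tau * h * h + CZ 2 * CPI * Ci * h * (z + half))%CC.

Lemma theta_ta tau z : theta tau z = - CsumZ (ta tau z).
Proof. reflexivity. Qed.

Definition Gm (tau : CC) (m : Z) (z : CC) : CC :=
  Cexp (CPI * Ci * tau * half * CZ m * CZ m + CZ 2 * CPI * Ci * CZ m * z).

Ltac reC := unfold half, Csub, Cadd, Cmul, Copp, CPI, Ci, CZ, CR; cbn [re im].

Lemma ta_summable tau z : (0 < im tau)%R -> summable (ta tau z).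
Proof.
  intros Ht. apply (cexp_gauss _ (PI * im tau) (2 * PI * im z) 1 (1/2)).
  - pose proof PI_RGT_0. nra.
  - lra.
  - intros j. reC. field.
Qed.

Lemma Ge_summable tau z : (0 < im tau)%R -> summable (fun p => Gm tau (2 * p) z).
Proof.
  intros Ht. apply (cexp_gauss _ (PI * im tau / 2) (2 * PI * im z) 2 0).
  - pose proof PI_RGT_0. apply Rdiv_lt_0_compat; nra.
  - lra.
  - intros j. reC. rewrite mult_IZR. field.
Qed.

Lemma Go_summable tau z : (0 < im tau)%R -> summable (fun p => Gm tau (2 * p + 1) z).
Proof.
  intros Ht. apply (cexp_gauss _ (PI * im tau / 2) (2 * PI * im z) 2 1).
  - pose proof PI_RGT_0. apply Rdiv_lt_0_compat; nra.
  - lra.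
  - intros j. reC. rewrite plus_IZR, mult_IZR. field.
Qed.

Lemma half_eq : half = C1 / CZ 2.
Proof. apply Ceq; unfold half, Cdiv, Cmul, Cinv, CZ, C1, CR; cbn [re im]; field. Qed.

Lemma CZ2_nz : CZ 2 <> C0.
Proof. intros E. assert (re (CZ 2) = re C0) by (rewrite E; auto). unfold CZ, CR, C0 in H; cbn in H. lra. Qed.

Lemma sin_int_pi p : sin (IZR p * PI) = 0%R.
Proof. apply sin_eq_0_1. exists p. reflexivity. Qed.

Lemma Cexp_pure r : Cexp (mkC 0 r) = mkC (cos r) (sin r).
Proof. apply Ceq; unfold Cexp; cbn [re im]; rewrite exp_0; ring. Qed.

Lemma Cexp_2pi_int p : Cexp (CZ 2 * CPI * Ci * CZ p) = C1.
Proof.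
  replace (CZ 2 * CPI * Ci * CZ p) with (mkC 0 (2 * (IZR p * PI))) by
    (apply Ceq; unfold CZ, CPI, Ci, Cmul, CR; cbn [re im]; ring).
  rewrite Cexp_pure. apply Ceq; unfold C1, CR; cbn [re im].
  - rewrite cos_2a_sin, sin_int_pi. ring.
  - rewrite sin_2a, sin_int_pi. ring.
Qed.

Lemma Cexp_2pi_half p : Cexp (CZ 2 * CPI * Ci * (CZ p + half)) = - C1.
Proof.
  replace (CZ 2 * CPI * Ci * (CZ p + half)) with (mkC 0 (2 * (IZR p * PI) + PI)) by
    (apply Ceq; unfold half, CZ, CPI, Ci, Cmul, Cadd, CR; cbn [re im]; field).
  rewrite Cexp_pure. apply Ceq; unfold C1, Copp, CR; cbn [re im].
  - rewrite neg_cos, cos_2a_sin, sin_int_pi. ring.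
  - rewrite neg_sin, sin_2a, sin_int_pi. ring.
Qed.
Lemma term1 tau x y p r :
  ta tau (x + y) (p + r) * ta tau (x - y) (p - r - 1) = Gm tau (2 * p) x * Gm tau (2 * r + 1) y.
Proof.
  unfold ta, Gm. cbv zeta. rewrite <- !Cexp_add.
  transitivity (Cexp ((CPI * Ci * tau * half * CZ (2 * p) * CZ (2 * p) + CZ 2 * CPI * Ci * CZ (2 * p) * x) +
     (CPI * Ci * tau * half * CZ (2 * r + 1) * CZ (2 * r + 1) + CZ 2 * CPI * Ci * CZ (2 * r + 1) * y)
     + CZ 2 * CPI * Ci * CZ p)).
  - f_equal. rewrite !CZ_add, !CZ_sub, !CZ_mul, half_eq. field. exact CZ2_nz.
  - rewrite (Cexp_add _ (CZ 2 * CPI * Ci * CZ p)), Cexp_2pi_int. ring.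
Qed.
Lemma term2 tau x y p r :
  ta tau (x + y) (p + r) * ta tau (x - y) (p - r) = - (Gm tau (2 * p + 1) x * Gm tau (2 * r) y).
Proof.
  unfold ta, Gm. cbv zeta. rewrite <- !Cexp_add.
  transitivity (Cexp ((CPI * Ci * tau * half * CZ (2 * p + 1) * CZ (2 * p + 1) + CZ 2 * CPI * Ci * CZ (2 * p + 1) * x) +
     (CPI * Ci * tau * half * CZ (2 * r) * CZ (2 * r) + CZ 2 * CPI * Ci * CZ (2 * r) * y)
     + CZ 2 * CPI * Ci * (CZ p + half))).
  - f_equal. rewrite !CZ_add, !CZ_sub, !CZ_mul, half_eq. field. exact CZ2_nz.
  - rewrite (Cexp_add _ (CZ 2 * CPI * Ci * (CZ p + half))), Cexp_2pi_half. ring.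
Qed.

Definition phi1 (q : Z * Z) : Z * Z := ((fst q + snd q)%Z, (fst q - snd q - 1)%Z).
Definition phi2 (q : Z * Z) : Z * Z := ((fst q + snd q)%Z, (fst q - snd q)%Z).
Definition LL (n : nat) := map phi1 (box n) ++ map phi2 (box n).

Lemma NoDup_LL n : NoDup (LL n).
Proof.
  unfold LL. apply NoDup_app.
  - apply NoDup_map_inj; [|apply NoDup_box]. intros [p r] [p' r'] E. unfold phi1 in E; simpl in E.
    injection E; intros. f_equal; lia.
  - apply NoDup_map_inj; [|apply NoDup_box]. intros [p r] [p' r'] E. unfold phi2 in E; simpl in E.
    injection E; intros. f_equal; lia.
  - intros q H1 H2. apply in_map_iff in H1, H2. destruct H1 as [[p r] [E1 _]]. destruct H2 as [[p' r'] [E2 _]].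
    rewrite <- E2 in E1. unfold phi1, phi2 in E1; simpl in E1. injection E1; intros. lia.
Qed.

Lemma incl_box_LL n : incl (box n) (LL n).
Proof.
  intros [j l] H. apply in_box in H. unfold LL. apply in_or_app.
  pose proof (Z.div2_odd (j + l)) as E. destruct (Z.odd (j + l)); cbn [Z.b2z] in E.
  - left. apply in_map_iff. exists ((Z.div2 (j + l) + 1)%Z, (j - Z.div2 (j + l) - 1)%Z).
    split.
    + unfold phi1; simpl. f_equal; lia.
    + apply in_box. lia.
  - right. apply in_map_iff. exists (Z.div2 (j + l), (j - Z.div2 (j + l))%Z).
    split.
    + unfold phi2; simpl. f_equal; lia.
    + apply in_box. lia.
Qed.

Lemma incl_LL_box n : incl (LL n) (box (2 * n + 1)).
Proof.
  intros q H. unfold LL in H. apply in_app_or in H. destruct H as [H|H]; apply in_map_iff in H;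
    destruct H as [[p r] [<- H]]; apply in_box in H; unfold phi1, phi2; simpl; apply in_box; lia.
Qed.

Lemma Csum_map_opp {A} (g : A -> CC) l : Csum (map (fun x => - g x) l) = - Csum (map g l).
Proof. induction l; simpl. ring. rewrite IHl. ring. Qed.

Lemma Ccn_sub u w a b : Ccn u a -> Ccn w b -> Ccn (fun n => u n - w n) (a - b).
Proof.
  intros Hu Hw e He. destruct (Hu (e/2)%R ltac:(lra)) as [N1 H1]. destruct (Hw (e/2)%R ltac:(lra)) as [N2 H2].
  exists (N1 + N2)%nat. intros n Hn. specialize (H1 n ltac:(lia)). specialize (H2 n ltac:(lia)).
  replace (u n - w n - (a - b)) with ((u n - a) - (w n - b)) by ring.
  pose proof (Cn_sub (u n - a) (w n - b)). lra.
Qed.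

Definition Ae tau z := CsumZ (fun p => Gm tau (2 * p) z).
Definition Ao tau z := CsumZ (fun p => Gm tau (2 * p + 1) z).

Theorem theta_H tau : (0 < im tau)%R -> forall s d,
  theta tau (s + d) * theta tau (s - d) = Ae tau s * Ao tau d - Ao tau s * Ae tau d.
Proof.
  intros Ht s d. rewrite !theta_ta.
  set (a := ta tau (s + d)). set (b := ta tau (s - d)).
  replace (- CsumZ a * - CsumZ b) with (CsumZ a * CsumZ b) by ring.
  apply Csub_eq0, Cn_small. intros e He.
  destruct (region a b (ta_summable _ _ Ht) (ta_summable _ _ Ht) (e/2)%R ltac:(lra)) as [n0 Hn0].
  assert (Hc := Ccn_sub _ _ _ _
    (Ccn_mul _ _ _ _ (Ccv_Ccn _ _ (summable_cv _ (Ge_summable tau s Ht)))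
                     (Ccv_Ccn _ _ (summable_cv _ (Go_summable tau d Ht))))
    (Ccn_mul _ _ _ _ (Ccv_Ccn _ _ (summable_cv _ (Go_summable tau s Ht)))
                     (Ccv_Ccn _ _ (summable_cv _ (Ge_summable tau d Ht))))).
  destruct (Hc (e/2)%R ltac:(lra)) as [n1 Hn1]. cbv beta in Hn1.
  set (n := (n0 + n1)%nat).
  specialize (Hn0 n (LL n) (2 * n + 1)%nat ltac:(lia) (NoDup_LL n) (incl_box_LL n) (incl_LL_box n)).
  specialize (Hn1 n ltac:(lia)).
  assert (E : Csum (map (fun p => a (fst p) * b (snd p)) (LL n)) =
     Cpartial (fun p => Gm tau (2 * p) s) n * Cpartial (fun p => Gm tau (2 * p + 1) d) n -
     Cpartial (fun p => Gm tau (2 * p + 1) s) n * Cpartial (fun p => Gm tau (2 * p) d) n).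
  { unfold LL. rewrite map_app, Csum_app, !map_map, !Cpartial_zr.
    rewrite (Csum_map_ext_in _ (fun q => Gm tau (2 * fst q) s * Gm tau (2 * snd q + 1) d))
      by (intros [p r] _; unfold phi1, a, b; simpl; apply term1).
    rewrite (Csum_map_ext_in (fun x => a (fst (phi2 x)) * b (snd (phi2 x)))
               (fun q => - (Gm tau (2 * fst q + 1) s * Gm tau (2 * snd q) d)))
      by (intros [p r] _; unfold phi2, a, b; simpl; apply term2).
    rewrite Csum_map_opp.
    unfold box. rewrite (Csum_prod (fun p => Gm tau (2 * p) s) (fun r => Gm tau (2 * r + 1) d)).
    rewrite (Csum_prod (fun p => Gm tau (2 * p + 1) s) (fun r => Gm tau (2 * r) d)). ring. }
  rewrite E in Hn0.
  match goal with |- (Cn (?X - ?Z)%CC <= _)%R =>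
    match type of Hn0 with (Cn (?Y - _)%CC <= _)%R =>
      replace (X - Z) with ((Y - Z) - (Y - X)) by ring;
      pose proof (Cn_sub (Y - Z) (Y - X)) end end.
  unfold Ae, Ao in *. lra.
Qed.

Theorem lemma4p2 (tau eta Lam v lam : CC) (f : CC -> CC)
  (Htau : (0 < im tau)%R)
  (Hf : f = theta tau \/ f = sinpi)
  (* genericity: all denominators occurring in the weights are nonzero *)
  (Heta : f (CZ 2 * eta) <> C0)
  (Hlam : forall m : Z, f (lam + CZ 2 * CZ m * eta) <> C0)
  (Hv : forall m : Z, f (eta * Lam - v + CZ 2 * CZ m * eta) <> C0)
  (J : nat) (HJ : (0 < J)%nat) (i1 j1 i2 j2 : nat) (Hj2 : (j2 <= J)%nat)
  (K : list Z) (HKlen : length K = J) (HK01 : Forall (fun x => x = 0%Z \/ x = 1%Z) K)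
  (HKsum : sumZ K = Z.of_nat j2) :
  fusedWK f eta Lam J (Z.of_nat i1) (Z.of_nat j1) (Z.of_nat i2) K v lam =
  Csum (map (fun k : nat =>
     let kz := Z.of_nat k in
     let m := (Z.of_nat i1 + kz - Z.of_nat j2)%Z in
     fusedW f eta Lam j2 (Z.of_nat i1) kz m (Z.of_nat j2) v
        (lam - CZ 2 * eta * CZ (Z.of_nat J - 2 * Z.of_nat j1 - Z.of_nat j2 + 2 * kz))
     * fusedW f eta Lam (J - j2) m (Z.of_nat j1 - kz) (Z.of_nat i2) 0
        (v + CZ 2 * eta * CZ (Z.of_nat j2)) lam)
   (seq 0 (J + 1))).
Proof.
  destruct Hf as [-> | ->].
  - exact (main_comb (theta tau) (Ae tau) (Ao tau) (theta_H tau Htau) eta Lam v lam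
      Heta Hlam Hv J i1 j1 i2 j2 Hj2 K HKlen HK01 HKsum).
  - exact (main_comb sinpi (fun x => sinpi x * sinpi x) (fun _ => C1) sinpi_H eta Lam v lam
      Heta Hlam Hv J i1 j1 i2 j2 Hj2 K HKlen HK01 HKsum).
Qed.
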